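(* Let $\Omega=[\alpha,\beta]$ with $\alpha<\beta$, and let $q_1,\dots,q_m\in(\alpha,\beta)$ be arbitrary points. Then $F=G_{q_m}G_{q_{m-1}}\cdots G_{q_1}0_\Omega$ is an $\Omega$-tropical polynomial all of whose non-smooth points have multiplicity at most $2$.
   Context: Let $\Omega=[\alpha,\beta]$ be a compact interval with $\alpha<\beta$. An $\Omega$-tropical series is a function $F:\Omega\to[0,\infty)$ with $F(\alpha)=F(\beta)=0$ that can be written as $F(z)=\inf_{v\in\mathbb{Z}}(a_v+zv)$ for some real numbers $a_v$; its canonical coefficients are $a_v=\sup_{z\in\Omega}(F(z)-zv)$. Such $F$ is concave piecewise linear with integer slopes; its non-smooth points are the points of $(\alpha,\beta)$ where $F$ is not differentiable, and the multiplicity of such a point $h$ is $F'(h^-)-F'(h^+)\in\mathbb{Z}_{\ge1}$. An $\Omega$-tropical polynomial is an $\Omega$-tropical series with finitely many non-smooth points. $0_\Omega$ is the zero function on $\Omega$. For $p\in(\alpha,\beta)$ the operator $G_p$ is defined as follows: if $F$ is not differentiable at $p$, then $G_pF=F$; otherwise there is a unique $w\in\mathbb{Z}$ with $F(z)=a_w+zw$ near $p$ ($a_v$ canonical coefficients of $F$), and $G_pF(z)=\inf_{v\in\mathbb{Z}}(b_v+zv)$ for $z\in\Omega$, where $b_v=a_v$ for $v\neq w$ and $b_w=\min_{v\in\mathbb{Z}\setminus\{w\}}(a_v+pv)-pw$. *)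

(* Defs.v *)
From HB Require Import structures.
From mathcomp Require Import all_boot all_order all_algebra.
From mathcomp Require Import all_classical all_reals all_analysis.
Set Implicit Arguments. Unset Strict Implicit. Unset Printing Implicit Defensive.
Import Order.TTheory GRing.Theory Num.Theory.
Import numFieldNormedType.Exports.
Local Open Scope classical_set_scope.
Local Open Scope ring_scope.

Section Tropical.
Variable R : realType.
Variables alpha beta : R.

Definition Omega : set R := [set z | z \in `[alpha, beta]].

Definition trop_vals (a : int -> R) (z : R) : set R :=
  [set a v + z * v%:~R | v in [set: int]].

(* Omega-tropical series: F : Omega -> [0,oo), F alpha = F beta = 0, and
   F z = inf_v (a_v + z v) on Omega for some real a_v (the infimum being a
   real number, i.e. the set is bounded below). Values off Omega are irrelevant. *)
Definition trop_series (F : R -> R) : Prop :=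
  [/\ (forall z, z \in `[alpha, beta] -> 0 <= F z),
      F alpha = 0, F beta = 0 &
      (exists a : int -> R, forall z, z \in `[alpha, beta] ->
        has_lbound (trop_vals a z) /\ F z = inf (trop_vals a z))].

Definition canon (F : R -> R) (v : int) : R :=
  sup [set F z - z * v%:~R | z in Omega].

Definition nonsmooth (F : R -> R) (h : R) : Prop :=
  (h \in `]alpha, beta[) /\ ~ derivable F h 1.

Definition left_deriv (F : R -> R) (h : R) : R :=
  lim ((fun t => (F (h + t) - F h) / t) @ 0^'-).
Definition right_deriv (F : R -> R) (h : R) : R :=
  lim ((fun t => (F (h + t) - F h) / t) @ 0^'+).

Definition multiplicity (F : R -> R) (h : R) : R :=
  left_deriv F h - right_deriv F h.

Definition trop_poly (F : R -> R) : Prop :=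
  trop_series F /\ finite_set (nonsmooth F).

Definition zeroOmega : R -> R := fun _ => 0.

(* If F is differentiable at p, the unique w with
   F z = a_w + z w near p is exactly the v satisfying the "near" test below;
   its coefficient is replaced by min_{u <> w}(a_u + p u) - p w. *)
Definition Gcoef (p : R) (F : R -> R) (v : int) : R :=
  if `[< \forall z \near p, F z = canon F v + z * v%:~R >]
  then inf [set canon F u + p * u%:~R | u in [set u | u != v]] - p * v%:~R
  else canon F v.

Definition G (p : R) (F : R -> R) : R -> R :=
  if `[< derivable F p 1 >] then (fun z => inf (trop_vals (Gcoef p F) z))
  else F.

End Tropical.

(* Main.v *)
Require Import Defs.
From HB Require Import structures.
From mathcomp Require Import all_boot all_order all_algebra.
From mathcomp Require Import all_classical all_reals all_analysis.
Import Order.TTheory GRing.Theory Num.Theory.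
Local Open Scope classical_set_scope.
Local Open Scope ring_scope.
From mathcomp Require Import ring lra zify.

Module Dev.
Import numFieldNormedType.Exports.

Section Aux.
Variable R : realType.
Variables alpha beta : R.

Definition hp (x : R) : R := Num.max x 0.
Lemma hp_id x : 0 <= x -> hp x = x.
Proof. by move=> h; rewrite /hp; apply/max_idPl. Qed.
Lemma hp0 x : x <= 0 -> hp x = 0.
Proof. by move=> h; rewrite /hp; apply/max_idPr. Qed.
Lemma hp_ge x : x <= hp x.
Proof. by rewrite /hp le_max lexx. Qed.
Lemma hp_ge0 x : 0 <= hp x.
Proof. by rewrite /hp le_max lexx orbT. Qed.

Definition fml (s0 : int) (xs : seq R) (z : R) : R :=
  s0%:~R * (z - alpha) - \sum_(x <- xs) hp (z - x).

Lemma sum_hp_diff (a : pred R) (y z : R) (s : seq R) :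
  (forall x, a x -> x <= z) -> (forall x, ~~ a x -> z <= x) ->
  (count a s)%:R * (y - z) <= \sum_(x <- s) hp (y - x) - \sum_(x <- s) hp (z - x).
Proof.
move=> h1 h2; elim: s => [|x s IH]; first by rewrite !big_nil /= mul0r subrr.
rewrite !big_cons /=.
have H : (a x)%:R * (y - z) <= hp (y - x) - hp (z - x).
  case ax: (a x).
  - rewrite (@hp_id (z - x)); last by rewrite subr_ge0 h1.
    have := hp_ge (y - x); rewrite mul1r; lra.
  - rewrite (@hp0 (z - x)); last by rewrite subr_le0 h2 // ax.
    by rewrite mul0r subr0 hp_ge0.
rewrite natrD mulrDl; lra.
Qed.

Lemma fml_support (s0 : int) xs (a : pred R) (y z : R) :
  (forall x, a x -> x <= z) -> (forall x, ~~ a x -> z <= x) ->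
  fml s0 xs y <= fml s0 xs z + (y - z) * (s0 - (count a xs)%:Z)%:~R.
Proof.
move=> h1 h2; have := sum_hp_diff a y z xs h1 h2; rewrite /fml.
rewrite intrB -pmulrn.
set A := \sum_(_ <- _) _; set B := \sum_(_ <- _) _.
move=> H; have : (count a xs)%:R * (y - z) <= A - B by [].
nra.
Qed.


Lemma segment (xs : seq R) (p : R) :
  alpha < p < beta -> (forall x, x \in xs -> alpha < x < beta) ->
  exists l r, [/\ alpha <= l < p, p < r <= beta,
    (l = alpha \/ l \in xs), (r = beta \/ r \in xs) &
    (forall x, x \in xs -> x <= l \/ x = p \/ r <= x)].
Proof.
move=> /andP[ap pb]; elim: xs => [|y ys IH] hxs.
  by exists alpha, beta; split => //; rewrite ?lexx ?ap ?pb //; left.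
have [l [r [/andP[al lp] /andP[pr rb] hl hr hx]]] : exists l r, [/\ alpha <= l < p, p < r <= beta,
    (l = alpha \/ l \in ys), (r = beta \/ r \in ys) &
    (forall x, x \in ys -> x <= l \/ x = p \/ r <= x)].
  by apply: IH => x hx; apply: hxs; rewrite inE hx orbT.
have /andP[ay yb] : alpha < y < beta by apply: hxs; rewrite inE eqxx.
have hl' : forall l0 c, (l0 = c \/ l0 \in ys) -> (l0 = c \/ l0 \in y :: ys).
  by move=> l0 c [->|h]; [left|right; rewrite inE h orbT].
have [yp|py|eyp] := ltgtP y p.
- have [ly|yl] := leP l y.
  + exists y, r; split; rewrite ?(ltW ay) ?yp ?pr ?rb //.
    * by right; rewrite inE eqxx.
    * exact: hl'.
    * move=> x; rewrite inE => /orP[/eqP->|/hx [h|[h|h]]]; first by left.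
      - by left; apply: le_trans ly.
      - by right; left.
      - by right; right.
  + exists l, r; split; rewrite ?al ?lp ?pr ?rb //; try exact: hl'.
    move=> x; rewrite inE => /orP[/eqP->|/hx //]; by left; apply: ltW.
- have [yr|ry] := leP y r.
  + exists l, y; split; rewrite ?(ltW yb) ?al ?lp ?py //.
    * exact: hl'.
    * by right; rewrite inE eqxx.
    * move=> x; rewrite inE => /orP[/eqP->|/hx [h|[h|h]]]; first by right; right.
      - by left.
      - by right; left.
      - by right; right; apply: le_trans h.
  + exists l, r; split; rewrite ?al ?lp ?pr ?rb //; try exact: hl'.
    move=> x; rewrite inE => /orP[/eqP->|/hx //]; by right; right; apply: ltW.
- exists l, r; split; rewrite ?al ?lp ?pr ?rb //; try exact: hl'.
  move=> x; rewrite inE => /orP[/eqP->|/hx //]; by right; left.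
Qed.

Lemma sum_hp_affine (a : pred R) (z p : R) (s : seq R) :
  (forall x, x \in s -> (a x /\ x <= z /\ x <= p) \/ (~~ a x /\ z <= x /\ p <= x)) ->
  \sum_(x <- s) hp (z - x) = \sum_(x <- s) hp (p - x) + (count a s)%:R * (z - p).
Proof.
elim: s => [|x s IH] hs; first by rewrite !big_nil mul0r addr0.
rewrite !big_cons /= IH; last by move=> y hy; apply: hs; rewrite inE hy orbT.
have [[ax [xz xp]]|[ax [zx px]]] := hs x (mem_head _ _).
- rewrite ax !hp_id ?subr_ge0 // natrD /=; ring.
- rewrite (negbTE ax) !hp0 ?subr_le0 // add0n /=; ring.
Qed.

Lemma fml_affine (s0 : int) xs (a : pred R) (z p : R) :
  (forall x, x \in xs -> (a x /\ x <= z /\ x <= p) \/ (~~ a x /\ z <= x /\ p <= x)) ->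
  fml s0 xs z = fml s0 xs p + (z - p) * (s0 - (count a xs)%:Z)%:~R.
Proof.
move=> h; rewrite /fml (@sum_hp_affine a z p xs h) intrB -pmulrn; ring.
Qed.


Definition sL (s0 : int) (xs : seq R) (z : R) : int := s0 - (count (fun x => x < z) xs)%:Z.
Definition sR (s0 : int) (xs : seq R) (z : R) : int := s0 - (count (fun x => x <= z) xs)%:Z.

Lemma supportL s0 xs y z : fml s0 xs y <= fml s0 xs z + (y - z) * (sL s0 xs z)%:~R.
Proof. by apply: fml_support => x; [apply: ltW|rewrite -leNgt]. Qed.
Lemma supportR s0 xs y z : fml s0 xs y <= fml s0 xs z + (y - z) * (sR s0 xs z)%:~R.
Proof. by apply: fml_support => x //; rewrite -ltNge => /ltW. Qed.

Lemma count_le_lt (h : R) s :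
  count (fun x => x <= h) s = addn (count (fun x => x < h) s) (count_mem h s).
Proof.
elim: s => //= x s ->; case: ltgtP => /= _; lia.
Qed.

Lemma near_LR (P : R -> Prop) (a : R) : (\forall t \near a^'-, P t) ->
  (\forall t \near a^'+, P t) -> \forall t \near a^', P t.
Proof.
rewrite /at_left /at_right /dnbhs !near_withinE => hl hr.
apply: filterS2 hl hr => t hl hr /= ta.
by case: (ltgtP t a) ta => [/hl|/hr|->] //; rewrite eqxx.
Qed.

Section Local.
Variables (s0 : int) (xs : seq R) (F : R -> R).
Hypothesis hF : forall z, alpha <= z <= beta -> F z = fml s0 xs z.
Hypothesis hxs : forall x, x \in xs -> alpha < x < beta.

Lemma local_aff (h : R) : alpha < h < beta ->
  exists l r, [/\ alpha <= l < h, h < r <= beta,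
    (forall z, l <= z <= h -> F z = F h + (z - h) * (sL s0 xs h)%:~R) &
    (forall z, h <= z <= r -> F z = F h + (z - h) * (sR s0 xs h)%:~R)].
Proof.
move=> hh; have [l [r [/andP[al lh] /andP[hr rb] _ _ hx]]] := @segment xs h hh hxs.
have /andP[ah hb] := hh.
have ohh : alpha <= h <= beta by rewrite (ltW ah) (ltW hb).
exists l, r; split; rewrite ?al ?lh ?hr ?rb //.
- move=> z /andP[lz zh].
  have oz : alpha <= z <= beta by rewrite (le_trans al lz) (le_trans zh (ltW hb)).
  rewrite (hF z oz) (hF h ohh).
  apply: fml_affine => x /hx [xl|[->|rx]].
  + by left; split; [exact: (le_lt_trans xl lh)|split; [exact: (le_trans xl lz)|exact: ltW (le_lt_trans xl lh)]].
  + by right; split; [rewrite ltxx|split].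
  + right; split; first by rewrite -leNgt ltW // (lt_le_trans hr rx).
    by split; apply: ltW; [apply: (le_lt_trans zh)|]; apply: (lt_le_trans hr rx).
- move=> z /andP[hz zr].
  have oz : alpha <= z <= beta by rewrite (le_trans (ltW ah) hz) (le_trans zr rb).
  rewrite (hF z oz) (hF h ohh).
  apply: fml_affine => x /hx [xl|[->|rx]].
  + left; split; first exact: ltW (le_lt_trans xl lh).
    by split; apply: ltW; [apply: (lt_le_trans _ hz)|]; apply: (le_lt_trans xl lh).
  + by left; split.
  + right; split; first by rewrite -ltNge (lt_le_trans hr rx).
    by split; [exact: (le_trans zr rx)|exact: ltW (lt_le_trans hr rx)].
Qed.


Lemma near_right h : alpha < h < beta ->
  \forall t \near 0^'+, (F (h + t) - F h) / t = (sR s0 xs h)%:~R.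
Proof.
move=> hh; have [l [r [_ /andP[hr _] _ hR]]] := local_aff h hh.
near=> t.
have t0 : 0 < t by near: t; exact: nbhs_right_gt.
have tr : t < r - h by near: t; apply: nbhs_right_lt; rewrite subr_gt0.
rewrite hR; last by apply/andP; split; lra.
have -> : F h + (h + t - h) * (sR s0 xs h)%:~R - F h = (sR s0 xs h)%:~R * t by ring.
by rewrite mulfK // gt_eqF.
Unshelve. all: by end_near.
Qed.

Lemma near_left h : alpha < h < beta ->
  \forall t \near 0^'-, (F (h + t) - F h) / t = (sL s0 xs h)%:~R.
Proof.
move=> hh; have [l [r [/andP[_ lh] _ hL _]]] := local_aff h hh.
near=> t.
have t0 : t < 0 by near: t; exact: nbhs_left_lt.
have tr : l - h < t by near: t; apply: nbhs_left_gt; rewrite subr_lt0.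
rewrite hL; last by apply/andP; split; lra.
have -> : F h + (h + t - h) * (sL s0 xs h)%:~R - F h = (sL s0 xs h)%:~R * t by ring.
by rewrite mulfK // lt_eqF.
Unshelve. all: by end_near.
Qed.

Lemma quotE h : (fun t : R => t^-1 *: ((F \o shift h) (t *: 1) - F h)) =
  (fun t => (F (h + t) - F h) / t).
Proof. apply/funext => t /=. rewrite -[t%:A]/(t * 1) mulr1 (addrC t h). rewrite -[t^-1 *: _]/(t^-1 * _). by rewrite mulrC. Qed.


Lemma sL_sR h : sL s0 xs h = sR s0 xs h + (count_mem h xs)%:Z.
Proof. rewrite /sL /sR count_le_lt; lia. Qed.

Lemma deriv_notin h : alpha < h < beta -> h \notin xs -> derivable F h 1.
Proof.
move=> hh hn; rewrite /derivable quotE; apply/cvg_ex; exists ((sR s0 xs h)%:~R).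
apply: cvg_near_cst; apply: near_LR; last exact: near_right h hh.
have e : sL s0 xs h = sR s0 xs h by rewrite sL_sR (count_memPn hn) addr0.
rewrite -e; exact: near_left h hh.
Qed.

Lemma nderiv_in h : alpha < h < beta -> h \in xs -> ~ derivable F h 1.
Proof.
move=> hh hin; rewrite /derivable quotE => /cvg_ex [l hl].
have e1 : lim ((fun t => (F (h + t) - F h) / t) @ 0^'+) = l.
  apply: cvg_lim; [exact: norm_hausdorff | exact: cvg_dnbhs_at_right hl].
have e2 : lim ((fun t => (F (h + t) - F h) / t) @ 0^'+) = (sR s0 xs h)%:~R.
  apply: lim_near_cst; [exact: norm_hausdorff | exact: near_right h hh].
have e3 : lim ((fun t => (F (h + t) - F h) / t) @ 0^'-) = l.
  apply: cvg_lim; [exact: norm_hausdorff | exact: cvg_dnbhs_at_left hl].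
have e4 : lim ((fun t => (F (h + t) - F h) / t) @ 0^'-) = (sL s0 xs h)%:~R.
  apply: lim_near_cst; [exact: norm_hausdorff | exact: near_left h hh].
have e : (sL s0 xs h)%:~R = (sR s0 xs h)%:~R :> R by rewrite -e4 e3 -e1 e2.
move/intr_inj: e; rewrite sL_sR.
have : (0 < count_mem h xs)%N by rewrite -has_count has_pred1.
move=> c0 e.
have : Posz (count_mem h xs) = Posz 0 by apply: (addrI (sR s0 xs h)); rewrite e addr0.
by case=> c00; rewrite c00 in c0.
Qed.

Lemma mult_le2 h : alpha < h < beta -> (forall y, (count_mem y xs <= 2)%N) ->
  multiplicity F h <= 2.
Proof.
move=> hh hc; rewrite /multiplicity /left_deriv /right_deriv.
have -> : lim ((fun t => (F (h + t) - F h) / t) @ 0^'-) = (sL s0 xs h)%:~R.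
  apply: lim_near_cst; [exact: norm_hausdorff | exact: near_left h hh].
have -> : lim ((fun t => (F (h + t) - F h) / t) @ 0^'+) = (sR s0 xs h)%:~R.
  apply: lim_near_cst; [exact: norm_hausdorff | exact: near_right h hh].
rewrite sL_sR intrD addrC addKr.
have := hc h; rewrite -(ler_nat R) => h2; apply: le_trans h2. by rewrite pmulrn.
Qed.


Lemma inOm z : (z \in `[alpha, beta]) = (alpha <= z <= beta).
Proof. by rewrite in_itv. Qed.

Lemma F_alpha : alpha < beta -> F alpha = 0.
Proof.
move=> ab; rewrite hF ?lexx ?(ltW ab) // /fml subrr mulr0 sub0r big1_seq ?oppr0 //.
by move=> x /andP[_ /hxs /andP[ax _]]; rewrite hp0 // subr_le0 ltW.
Qed.

Lemma F_supL y z : alpha <= y <= beta -> alpha <= z <= beta ->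
  F y <= F z + (y - z) * (sL s0 xs z)%:~R.
Proof. by move=> hy hz; rewrite hF // hF //; apply: supportL. Qed.
Lemma F_supR y z : alpha <= y <= beta -> alpha <= z <= beta ->
  F y <= F z + (y - z) * (sR s0 xs z)%:~R.
Proof. by move=> hy hz; rewrite hF // hF //; apply: supportR. Qed.

Lemma canon_ub v : alpha < beta -> has_ubound [set F z - z * v%:~R | z in Omega alpha beta].
Proof.
move=> ab; set c : R := (sL s0 xs alpha)%:~R.
have oa : alpha <= alpha <= beta by rewrite lexx ltW.
exists (Num.max (- alpha * v%:~R) ((beta - alpha) * c - beta * v%:~R)).
move=> _ [y hy <-]; rewrite /Omega /= inOm in hy.
have := F_supL y alpha hy oa; rewrite F_alpha // add0r => hFy.
have /andP[ay yb] := hy.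
rewrite le_max; have [cv|cv] := lerP 0 (c - v%:~R).
- apply/orP; right.
  have : (beta - y) * (c - v%:~R) >= 0 by rewrite mulr_ge0 // subr_ge0.
  nra.
- apply/orP; left.
  have : (y - alpha) * (v%:~R - c) >= 0 by rewrite mulr_ge0 // subr_ge0 //; lra.
  nra.
Qed.

Lemma canon_ge v y : alpha < beta -> alpha <= y <= beta -> F y - y * v%:~R <= Defs.canon alpha beta F v.
Proof.
move=> ab hy; apply: ub_le_sup; first exact: canon_ub.
by exists y => //; rewrite /Omega /= inOm.
Qed.

Lemma canon_le v z : alpha <= z <= beta ->
  (forall y, alpha <= y <= beta -> F y <= F z + (y - z) * v%:~R) ->
  Defs.canon alpha beta F v <= F z - z * v%:~R.
Proof.
move=> hz hs; apply: ge_sup; first by exists (F z - z * v%:~R), z => //; rewrite /Omega /= inOm.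
move=> _ [y hy <-]; rewrite /Omega /= inOm in hy.
have := hs y hy; lra.
Qed.

Lemma canon_eq v z : alpha < beta -> alpha <= z <= beta ->
  (forall y, alpha <= y <= beta -> F y <= F z + (y - z) * v%:~R) ->
  Defs.canon alpha beta F v = F z - z * v%:~R.
Proof. by move=> ab hz hs; apply/le_anti; rewrite canon_le // canon_ge. Qed.

End Local.

Lemma inf_eq (S : set R) x : S x -> lbound S x -> inf S = x.
Proof.
move=> Sx lb; apply/le_anti; rewrite lb_le_inf //; last by exists x.
by rewrite andbT; apply: ge_inf => //; exists x.
Qed.


Definition Inv (F : R -> R) := exists (s0 : int) (xs : seq R),
  [/\ (forall x, x \in xs -> alpha < x < beta), (forall y, (count_mem y xs <= 2)%N),
      (forall z, alpha <= z <= beta -> F z = fml s0 xs z) & fml s0 xs beta = 0].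

Lemma Inv_series F : alpha < beta -> Inv F -> Defs.trop_series alpha beta F.
Proof.
move=> ab [s0 [xs [hxs hc hF hb]]].
have oa : alpha <= alpha <= beta by rewrite lexx ltW.
have ob : alpha <= beta <= beta by rewrite lexx ltW.
have Fa := F_alpha _ _ _ hF hxs ab.
have Fb : F beta = 0 by rewrite hF.
split => //.
- move=> z; rewrite inOm => hz.
  have h1 := F_supL _ _ _ hF alpha z oa hz; have h2 := F_supL _ _ _ hF beta z ob hz.
  rewrite Fa in h1; rewrite Fb in h2.
  have /andP[az zb] := hz.
  have [c0|c0] := lerP 0 ((sL s0 xs z)%:~R : R).
  + have : (z - alpha) * (sL s0 xs z)%:~R >= 0 by rewrite mulr_ge0 // subr_ge0.
    lra.
  + have : (beta - z) * (sL s0 xs z)%:~R <= 0 by rewrite mulr_ge0_le0 ?subr_ge0 // ltW.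
    lra.
- exists (Defs.canon alpha beta F) => z; rewrite inOm => hz.
  have lb : lbound (trop_vals (Defs.canon alpha beta F) z) (F z).
    move=> _ [v _ <-]; have := canon_ge _ _ _ hF hxs v z ab hz; lra.
  split; first by exists (F z).
  apply/esym/inf_eq => //.
  exists (sL s0 xs z) => //.
  rewrite (canon_eq _ _ _ hF hxs (sL s0 xs z) z ab hz); first by ring.
  by move=> y hy; apply: F_supL.
Qed.

Lemma Inv_final F : alpha < beta -> Inv F ->
  Defs.trop_poly alpha beta F /\
  (forall h, Defs.nonsmooth alpha beta F h -> Defs.multiplicity F h <= 2).
Proof.
move=> ab hI; have hs := @Inv_series F ab hI.
move: hI => [s0 [xs [hxs hc hF hb]]].
split; first split => //.
- apply: (@sub_finite_set _ _ [set` xs]); last exact: finite_seq.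
  move=> h [hh hnd] /=; apply/negPn/negP => hn; apply: hnd.
  by apply: (deriv_notin _ _ _ hF hxs) => //; rewrite in_itv /= in hh.
- move=> h [hh _]; apply: (mult_le2 _ _ _ hF hxs) => //; by rewrite in_itv /= in hh.
Qed.


Lemma count_strict (a b : pred R) (s : seq R) y :
  (forall x, a x -> b x) -> y \in s -> b y -> ~~ a y -> (count a s < count b s)%N.
Proof.
move=> ab; elim: s => //= x s IH; rewrite inE => /orP[/eqP<-|ys] hby nay.
- rewrite (negbTE nay) hby /=; have := sub_count ab s; lia.
- have := IH ys hby nay; case ax: (a x); first by rewrite (ab _ ax); lia.
  case: (b x); lia.
Qed.

Lemma mem_rem_neq (x y : R) s : x \in s -> x != y -> x \in rem y s.
Proof.
elim: s => //= z s IH; rewrite inE => /orP[/eqP->|xs] xy.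
- by rewrite (negbTE xy) mem_head.
- by case: ifP => _ //; rewrite inE IH ?orbT.
Qed.

Lemma count_rem_le (x y : R) s : (count_mem y (rem x s) <= count_mem y s)%N.
Proof.
elim: s => //= z s IH; case: ifP => _ /=; lia.
Qed.


Lemma int_ne (a b : int) : b != a -> (a + 1 <= b)%R \/ (b <= a - 1)%R.
Proof. lia. Qed.
Lemma cnt_ne (s0 : int) (a b c : nat) : (a <= b)%N -> (b < c)%N -> (s0 - a%:Z != s0 - c%:Z)%R.
Proof. lia. Qed.
Lemma cnt_ne2 (s0 : int) (a b c : nat) : (a < b)%N -> (b <= c)%N -> (s0 - a%:Z != s0 - c%:Z)%R.
Proof. lia. Qed.

Lemma add3_le2 (a b : bool) (n : nat) : (n <= 0)%N -> (a + (b + n) <= 2)%N.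
Proof. by case: a; case: b => /=; lia. Qed.

Section Step.
Variables (s0 : int) (xs : seq R) (F : R -> R) (p l r : R).
Hypothesis hF : forall z, alpha <= z <= beta -> F z = fml s0 xs z.
Hypothesis hxs : forall x, x \in xs -> alpha < x < beta.
Hypothesis ab : alpha < beta.
Hypothesis pn : p \notin xs.
Hypotheses (al : alpha <= l) (lp : l < p) (pr : p < r) (rb : r <= beta).
Hypotheses (hl : l = alpha \/ l \in xs) (hr : r = beta \/ r \in xs).
Hypothesis hx : forall x, x \in xs -> x <= l \/ r <= x.

Definition w := sL s0 xs p.
Definition d := Num.min (p - l) (r - p).
Definition tent z := hp (z - l) - hp (z - (l + d)) - hp (z - (r - d)) + hp (z - r).

Lemma d_facts : [/\ 0 < d, d <= p - l, d <= r - p & (d = p - l \/ d = r - p)].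
Proof.
rewrite /d; split.
- by rewrite lt_min !subr_gt0 lp pr.
- by rewrite ge_min lexx.
- by rewrite ge_min lexx orbT.
- by case: leP => _; [left|right].
Qed.

Lemma Om_p : alpha <= p <= beta.
Proof. by rewrite (ltW (le_lt_trans al lp)) (ltW (lt_le_trans pr rb)). Qed.
Lemma Om_l : alpha <= l <= beta.
Proof. by rewrite al (ltW (lt_le_trans (lt_trans lp pr) rb)). Qed.
Lemma Om_r : alpha <= r <= beta.
Proof. by rewrite rb (ltW (le_lt_trans al (lt_trans lp pr))). Qed.

Lemma wR : sR s0 xs p = w.
Proof. by rewrite /w sL_sR (count_memPn pn) addr0. Qed.

Lemma K1 z : l <= z <= r -> F z = F p + (z - p) * w%:~R.
Proof.
move=> /andP[lz zr].
have oz : alpha <= z <= beta by rewrite (le_trans al lz) (le_trans zr rb).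
rewrite (hF z oz) (hF p Om_p); apply: fml_affine => x /hx [xl|rx].
- by left; split; [exact: (le_lt_trans xl lp)|split; [exact: (le_trans xl lz)|exact: ltW (le_lt_trans xl lp)]].
- right; split; first by rewrite -leNgt ltW // (lt_le_trans pr rx).
  by split; [exact: (le_trans zr rx)|exact: ltW (lt_le_trans pr rx)].
Qed.

Lemma count_l : count (fun x => x <= l) xs = count (fun x => x < p) xs.
Proof.
apply: eq_in_count => x /= xin; apply/idP/idP => [xl|xp]; first exact: (le_lt_trans xl lp).
by case: (hx x xin) => // rx; move: (lt_le_trans pr rx); rewrite ltNge ltW.
Qed.

Lemma count_r : count (fun x => x < r) xs = count (fun x => x <= p) xs.
Proof.
apply: eq_in_count => x /= xin; apply/idP/idP => [xr|xp].
- by case: (hx x xin) => [xl|rx]; [exact: ltW (le_lt_trans xl lp)|move: (lt_le_trans xr rx); rewrite ltxx].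
- exact: (le_lt_trans xp pr).
Qed.

Lemma sR_l : sR s0 xs l = w.
Proof. by rewrite /sR count_l. Qed.
Lemma sL_r : sL s0 xs r = w.
Proof. by rewrite /sL count_r -wR. Qed.

Lemma sL_l : l \in xs -> (w + 1 <= sL s0 xs l)%R.
Proof.
move=> lin; rewrite /w /sL.
have := @count_strict (fun x => x < l) (fun x => x < p) xs l (fun x xl => lt_trans xl lp) lin lp (negbT (ltxx l)).
set m := count _ xs; set n := count _ xs; move: m n => m n; lia.
Qed.

Lemma sR_r : r \in xs -> (sR s0 xs r <= w - 1)%R.
Proof.
move=> rin; rewrite -wR /sR.
have := @count_strict (fun x => x <= p) (fun x => x <= r) xs r (fun x xp => le_trans xp (ltW pr)) rin (lexx r).
rewrite /= leNgt pr /=.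
set m := count _ xs; set n := count _ xs; move: m n => m n; lia.
Qed.

Lemma sup_l y : alpha <= y <= beta -> F y <= F l + (y - l) * (w + 1)%:~R.
Proof.
move=> hy; have [ly|yl] := leP l y.
- have := F_supR _ _ _ hF y l hy Om_l; rewrite sR_l intrD.
  have : 0 <= y - l by rewrite subr_ge0.
  nra.
- have lin : l \in xs.
    case: hl => // la; have /andP[ay _] := hy; move: (le_lt_trans ay yl); by rewrite la ltxx.
  have := F_supL _ _ _ hF y l hy Om_l; have := sL_l lin; rewrite -(ler_int R) => hs.
  have : y - l <= 0 by rewrite subr_le0 ltW.
  nra.
Qed.

Lemma sup_r y : alpha <= y <= beta -> F y <= F r + (y - r) * (w - 1)%:~R.
Proof.
move=> hy; have [yr|ry] := leP y r.
- have := F_supL _ _ _ hF y r hy Om_r; rewrite sL_r => H; rewrite intrB.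
  have : y - r <= 0 by rewrite subr_le0.
  nra.
- have rin : r \in xs.
    case: hr => // rbe; have /andP[_ yb] := hy; move: (lt_le_trans ry yb); by rewrite rbe ltxx.
  have := F_supR _ _ _ hF y r hy Om_r; have := sR_r rin; rewrite -(ler_int R) => hs.
  have : 0 <= y - r by rewrite subr_ge0 ltW.
  nra.
Qed.


Lemma T_out z : z <= l \/ r <= z -> tent z = 0.
Proof.
have [d0 dl dr _] := d_facts; rewrite /tent => [[zl|rz]].
- rewrite (@hp0 (z - l)) ?(@hp0 (z - (l + d))) ?(@hp0 (z - (r - d))) ?(@hp0 (z - r)); lra.
- rewrite (@hp_id (z - l)) ?(@hp_id (z - (l + d))) ?(@hp_id (z - (r - d))) ?(@hp_id (z - r)); lra.
Qed.

Lemma T3 z : l <= z <= l + d -> tent z = z - l.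
Proof.
have [d0 dl dr _] := d_facts; rewrite /tent => /andP[h1 h2].
rewrite (@hp_id (z - l)) ?(@hp0 (z - (l + d))) ?(@hp0 (z - (r - d))) ?(@hp0 (z - r)); lra.
Qed.

Lemma T4 z : l + d <= z <= r - d -> tent z = d.
Proof.
have [d0 dl dr _] := d_facts; rewrite /tent => /andP[h1 h2].
rewrite (@hp_id (z - l)) ?(@hp_id (z - (l + d))) ?(@hp0 (z - (r - d))) ?(@hp0 (z - r)); lra.
Qed.

Lemma T5 z : r - d <= z <= r -> tent z = r - z.
Proof.
have [d0 dl dr _] := d_facts; rewrite /tent => /andP[h1 h2].
rewrite (@hp_id (z - l)) ?(@hp_id (z - (l + d))) ?(@hp_id (z - (r - d))) ?(@hp0 (z - r)); lra.
Qed.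

Lemma T_le z : l <= z <= r -> [/\ tent z <= z - l, tent z <= r - z & tent z <= d].
Proof.
have [d0 dl dr _] := d_facts => /andP[h1 h2].
have [z1|z1] := leP z (l + d).
  rewrite T3 ?h1 //; split; lra.
have [z2|z2] := leP (r - d) z.
  rewrite T5 ?z2 ?h2 //; split; lra.
rewrite T4; [split; lra|apply/andP; split; lra].
Qed.

Lemma T_le_d z : tent z <= d.
Proof.
have [d0 _ _ _] := d_facts.
have [/andP[h1 h2]|] := boolP (l <= z <= r).
  by have [] := T_le z; rewrite ?h1 ?h2.
rewrite negb_and -!ltNge => /orP[h|h]; rewrite T_out; try lra.
Qed.

Notation cF := (Defs.canon alpha beta F).

Lemma canon_w1 : cF (w + 1) = F l - l * (w + 1)%:~R.
Proof. exact: (canon_eq _ _ _ hF hxs (w + 1) l ab Om_l sup_l). Qed.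
Lemma canon_wm1 : cF (w - 1) = F r - r * (w - 1)%:~R.
Proof. exact: (canon_eq _ _ _ hF hxs (w - 1) r ab Om_r sup_r). Qed.
Lemma canon_w : cF w = F p - p * w%:~R.
Proof.
apply: (canon_eq _ _ _ hF hxs w p ab Om_p) => y hy.
exact: (F_supL _ _ _ hF y p hy Om_p).
Qed.

Lemma LBne v z : v != w -> alpha <= z <= beta -> F z + tent z <= cF v + z * v%:~R.
Proof.
move=> vw hz.
have [hlr|] := boolP (l <= z <= r); last first.
  rewrite negb_and -!ltNge => hout; rewrite T_out; last first.
    by case/orP: hout => h; [left|right]; apply: ltW.
  by have := canon_ge _ _ _ hF hxs v z ab hz; lra.
have /andP[lz zr] := hlr.
have [tl tr _] := T_le z hlr.
have Fz := K1 z hlr.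
have Fl : F l = F p + (l - p) * w%:~R by apply: K1; rewrite lexx ltW // (lt_trans lp pr).
have Fr : F r = F p + (r - p) * w%:~R by apply: K1; rewrite lexx ltW // (lt_trans lp pr).
have := int_ne _ _ vw.
case=> [hv|hv].
- have := canon_ge _ _ _ hF hxs v l ab Om_l.
  have : (w + 1)%:~R <= v%:~R :> R by rewrite ler_int.
  rewrite intrD => hv'.
  have : 0 <= (z - l) * (v%:~R - w%:~R - 1) by rewrite mulr_ge0 // subr_ge0 ?lerBrDr // addrC.
  nra.
- have := canon_ge _ _ _ hF hxs v r ab Om_r.
  have : v%:~R <= (w - 1)%:~R :> R by rewrite ler_int.
  rewrite intrB => hv'.
  have : 0 <= (r - z) * (w%:~R - 1 - v%:~R) by rewrite mulr_ge0 // subr_ge0.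
  nra.
Qed.

Definition cset := [set cF u + p * u%:~R | u in [set u | u != w]].
Definition cval := inf cset.

Lemma wp1 : (w + 1 != w)%R. Proof. lia. Qed.
Lemma wm1 : (w - 1 != w)%R. Proof. lia. Qed.

Lemma tent_p : tent p = d.
Proof. have [d0 dl dr _] := d_facts; apply: T4; apply/andP; split; lra. Qed.

Lemma cset_lb : lbound cset (F p + d).
Proof.
move=> _ [u /= uw <-]; rewrite -tent_p; exact: (LBne u p uw Om_p).
Qed.

Lemma cval_eq : cval = F p + d.
Proof.
have [d0 dl dr dd] := d_facts.
have Fl : F l = F p + (l - p) * w%:~R by apply: K1; rewrite lexx ltW // (lt_trans lp pr).
have Fr : F r = F p + (r - p) * w%:~R by apply: K1; rewrite lexx ltW // (lt_trans lp pr).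
apply/le_anti/andP; split; last first.
  apply: lb_le_inf; last exact: cset_lb.
  by exists (cF (w + 1) + p * (w + 1)%:~R), (w + 1) => //=; exact: wp1.
have hlb : has_lbound cset by exists (F p + d); exact: cset_lb.
have e1 : cval <= cF (w + 1) + p * (w + 1)%:~R.
  by apply: ge_inf => //; exists (w + 1) => //=; exact: wp1.
have e2 : cval <= cF (w - 1) + p * (w - 1)%:~R.
  by apply: ge_inf => //; exists (w - 1) => //=; exact: wm1.
rewrite canon_w1 intrD in e1; rewrite canon_wm1 intrB in e2.
case: dd => ->; nra.
Qed.

Lemma near_lr : \forall z \near p, l < z < r.
Proof.
have := @near_in_itvoo R l r p; rewrite in_itv /= lp pr => /(_ isT).
by apply: filterS => z; rewrite in_itv.
Qed.

Lemma near_test v : `[< \forall z \near p, F z = cF v + z * v%:~R >] = (v == w).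
Proof.
have [->|vw] := eqVneq v w.
  apply/asboolP; apply: filterS near_lr => z /andP[lz zr].
  by rewrite K1 ?canon_w ?(ltW lz) ?(ltW zr) //; ring.
apply: asboolF => H.
have K : \forall z \near p, cF v + z * v%:~R = F p + (z - p) * w%:~R.
  apply: filterS2 H near_lr => z <- /andP[lz zr].
  by apply: K1; rewrite (ltW lz) (ltW zr).
have Kp := nbhs_singleton K.
have K' : \forall z \near p^'+, cF v + z * v%:~R = F p + (z - p) * w%:~R.
  by rewrite /at_right near_withinE; apply: filterS K => z hz _.
have K2 : \forall z \near p^'+, (cF v + z * v%:~R = F p + (z - p) * w%:~R) /\ p < z.
  by apply: filterS2 K' (nbhs_right_gt p) => z a b.
have [z [Kz pz]] := filter_ex K2.
have : (z - p) * (v%:~R - w%:~R) = 0 by rewrite /= in Kp; lra.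
move/eqP; rewrite mulf_eq0 => /orP[|].
  by rewrite subr_eq0 => /eqP zp; move: pz; rewrite zp ltxx.
by rewrite subr_eq0 => /eqP/intr_inj e; move: vw; rewrite e eqxx.
Qed.

Lemma Gcoef_ne v : v != w -> Defs.Gcoef alpha beta p F v = cF v.
Proof. by move=> vw; rewrite /Defs.Gcoef near_test (negbTE vw). Qed.
Lemma Gcoef_w : Defs.Gcoef alpha beta p F w = cval - p * w%:~R.
Proof. by rewrite /Defs.Gcoef near_test eqxx. Qed.

Lemma LB_all v z : alpha <= z <= beta ->
  F z + tent z <= Defs.Gcoef alpha beta p F v + z * v%:~R.
Proof.
move=> hz; have [->|vw] := eqVneq v w; last by rewrite Gcoef_ne //; exact: LBne.
rewrite Gcoef_w cval_eq.
have := F_supL _ _ _ hF z p hz Om_p; rewrite -/w => h1.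
have := T_le_d z; lra.
Qed.

Lemma attain z : alpha <= z <= beta ->
  exists v, Defs.Gcoef alpha beta p F v + z * v%:~R <= F z + tent z.
Proof.
move=> hz; have /andP[az zb] := hz.
have [d0 dl dr _] := d_facts.
have Fl : F l = F p + (l - p) * w%:~R by apply: K1; rewrite lexx ltW // (lt_trans lp pr).
have Fr : F r = F p + (r - p) * w%:~R by apply: K1; rewrite lexx ltW // (lt_trans lp pr).
have [zl|lz] := ltP z l.
  have lin : l \in xs.
    by case: hl => // la; move: (le_lt_trans az zl); rewrite la ltxx.
  have vw : sL s0 xs z != w.
    rewrite /w /sL.
    have h1 := @sub_count _ (fun x => x < z) (fun x => x < l) (fun x xz => lt_trans xz zl) xs.
    have h2 := @count_strict (fun x => x < l) (fun x => x < p) xs l (fun x xl => lt_trans xl lp) lin lp (negbT (ltxx l)).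
    exact: cnt_ne h1 h2.
  exists (sL s0 xs z); rewrite Gcoef_ne // (canon_eq _ _ _ hF hxs _ z ab hz); last first.
    by move=> y hy; apply: F_supL.
  by rewrite T_out; [lra|left; apply: ltW].
have [z1|z1] := leP z (l + d).
  have hz1 : l <= z <= r by apply/andP; split; lra.
  exists (w + 1); rewrite (Gcoef_ne _ wp1) canon_w1 T3; last by apply/andP; split.
  rewrite (K1 z hz1) Fl intrD; lra.
have [z2|z2] := leP z (r - d).
  have hz1 : l <= z <= r by apply/andP; split; lra.
  exists w; rewrite Gcoef_w cval_eq T4; last by apply/andP; split; lra.
  rewrite (K1 z hz1); lra.
have [z3|z3] := leP z r.
  have hz1 : l <= z <= r by apply/andP; split; lra.
  exists (w - 1); rewrite (Gcoef_ne _ wm1) canon_wm1 T5; last by apply/andP; split; lra.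
  rewrite (K1 z hz1) Fr [(w - 1)%:~R]intrB; lra.
have rin : r \in xs.
  by case: hr => // rbe; move: (lt_le_trans z3 zb); rewrite rbe ltxx.
have vw : sR s0 xs z != w.
  rewrite -wR /sR.
  have h1 := @sub_count _ (fun x => x <= r) (fun x => x <= z) (fun x xr => le_trans xr (ltW z3)) xs.
  have h2 := @count_strict (fun x => x <= p) (fun x => x <= r) xs r (fun x xp => le_trans xp (ltW pr)) rin (lexx r) (negbT (lt_geF pr)).
  by rewrite eq_sym; exact: cnt_ne2 h2 h1.
exists (sR s0 xs z); rewrite Gcoef_ne // (canon_eq _ _ _ hF hxs _ z ab hz); last first.
  by move=> y hy; apply: F_supR.
by rewrite T_out; [lra|right; apply: ltW].
Qed.

Lemma hpp : alpha < p < beta.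
Proof. by rewrite (le_lt_trans al lp) (lt_le_trans pr rb). Qed.

Lemma G_val z : alpha <= z <= beta -> Defs.G alpha beta p F z = F z + tent z.
Proof.
move=> hz; rewrite /Defs.G asboolT; last exact: (deriv_notin _ _ _ hF hxs p hpp pn).
have [v hv] := attain z hz.
apply: inf_eq; last by move=> _ [u _ <-]; exact: LB_all.
exists v => //; apply/le_anti; rewrite hv; exact: LB_all.
Qed.


Definition s0' := if l == alpha then s0 + 1 else s0.
Definition reml (s : seq R) := if l == alpha then s else rem l s.
Definition remr (s : seq R) := if r == beta then s else rem r s.
Definition xs' := (l + d) :: (r - d) :: remr (reml xs).

Lemma sum_reml z : alpha <= z ->
  s0'%:~R * (z - alpha) - \sum_(x <- reml xs) hp (z - x) =
  s0%:~R * (z - alpha) - \sum_(x <- xs) hp (z - x) + hp (z - l).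
Proof.
move=> az; rewrite /s0' /reml; case: eqP => [la|lna].
  by rewrite la hp_id ?subr_ge0 // intrD; ring.
have lin : l \in xs by case: hl.
rewrite (big_rem l lin) /=; ring.
Qed.

Lemma r_in : r != beta -> r \in reml xs.
Proof.
move=> rn; have rin : r \in xs by case: hr => // rb'; move: rn; rewrite rb' eqxx.
rewrite /reml; case: ifP => // _; apply: mem_rem_neq => //.
by rewrite gt_eqF // (lt_trans lp pr).
Qed.

Lemma sum_remr z : z <= beta ->
  \sum_(x <- remr (reml xs)) hp (z - x) = \sum_(x <- reml xs) hp (z - x) - hp (z - r).
Proof.
move=> zb; rewrite /remr; case: eqP => [->|rn].
  by rewrite hp0 ?subr_le0 // subr0.
rewrite (big_rem r (r_in (introN eqP rn))) /=; ring.
Qed.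

Lemma fml_new z : alpha <= z <= beta -> fml s0' xs' z = fml s0 xs z + tent z.
Proof.
move=> /andP[az zb]; rewrite /fml /xs' !big_cons sum_remr //.
have := sum_reml z az; rewrite /tent; lra.
Qed.

Lemma mem_rem_sub (x y : R) s : x \in rem y s -> x \in s.
Proof.
elim: s => //= z s IH; case: ifP => _; rewrite inE; first by move=> ->; rewrite orbT.
by rewrite inE => /orP[->//|/IH ->]; rewrite orbT.
Qed.

Lemma xs'_in x : x \in xs' -> alpha < x < beta.
Proof.
have [d0 dl dr _] := d_facts.
rewrite /xs' !inE => /orP[/eqP->|/orP[/eqP->|h]].
- have h1 : alpha < l + d by apply: (le_lt_trans al); rewrite ltrDl.
  have h2 : l + d < beta.
    apply: (le_lt_trans (_ : l + d <= p)); last exact: (lt_le_trans pr rb).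
    by rewrite -lerBrDl.
  by rewrite h1 h2.
- have h2 : r - d < beta by apply: (lt_le_trans _ rb); rewrite ltrBlDr ltrDl.
  have h1 : alpha < r - d.
    apply: (lt_le_trans (_ : alpha < p)); first exact: (le_lt_trans al lp).
    by rewrite lerBrDr -lerBrDl.
  by rewrite h1 h2.
have H1 : {subset reml xs <= xs}.
  by rewrite /reml; case: ifP => _ y0 //; exact: mem_rem_sub.
have H2 : forall s, {subset remr s <= s}.
  by move=> s; rewrite /remr; case: ifP => _ y0 //; exact: mem_rem_sub.
by apply: hxs; apply: H1; apply: H2.
Qed.

Lemma cnt_rem y : (count_mem y (remr (reml xs)) <= count_mem y xs)%N.
Proof.
rewrite /remr /reml; case: ifP => _; case: ifP => _ //; rewrite ?count_rem_le //.
by apply: leq_trans (count_rem_le _ _ _) (count_rem_le _ _ _).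
Qed.

Lemma xs'_cnt : (forall y, (count_mem y xs <= 2)%N) -> forall y, (count_mem y xs' <= 2)%N.
Proof.
move=> hc y; have [d0 dl dr _] := d_facts.
have h := cnt_rem y; rewrite /xs' /=.
have [/andP[ly yr]|] := boolP ((l < y) && (y < r)).
  have : y \notin xs.
    apply/negP => /hx [yl|ry]; [move: (lt_le_trans ly yl)|move: (lt_le_trans yr ry)]; by rewrite ltxx.
  move/count_memPn => c0; rewrite c0 in h.
  exact: add3_le2 h.
rewrite negb_and -!leNgt => hy.
have e1 : (l + d == y) = false by apply/negP => /eqP e; move: hy; rewrite -e; apply/negP; rewrite negb_or -!ltNge; apply/andP; split; lra.
have e2 : (r - d == y) = false by apply/negP => /eqP e; move: hy; rewrite -e; apply/negP; rewrite negb_or -!ltNge; apply/andP; split; lra.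
rewrite e1 e2 /=; exact: leq_trans h (hc y).
Qed.

Lemma Inv_step : (forall y, (count_mem y xs <= 2)%N) -> fml s0 xs beta = 0 ->
  Inv (Defs.G alpha beta p F).
Proof.
move=> hc hb; exists s0', xs'; split.
- exact: xs'_in.
- exact: xs'_cnt.
- by move=> z hz; rewrite G_val // fml_new // hF.
- have ob : alpha <= beta <= beta by rewrite lexx ltW.
  by rewrite fml_new // T_out ?addr0 //; right.
Qed.

End Step.

Lemma Inv_G F p : alpha < beta -> alpha < p < beta -> Inv F -> Inv (Defs.G alpha beta p F).
Proof.
move=> ab hpp [s0 [xs [hxs hc hF hb]]].
have [pin|pn] := boolP (p \in xs).
  rewrite /Defs.G asboolF; first by exists s0, xs.
  exact: (nderiv_in _ _ _ hF hxs p hpp pin).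
have [l [r [/andP[al lp] /andP[pr rb] hl hr hx0]]] := @segment xs p hpp hxs.
have hx : forall x, x \in xs -> x <= l \/ r <= x.
  move=> x xin; case: (hx0 x xin) => [|[xp|]]; [by left| |by right].
  by move: pn; rewrite -xp xin.
exact: (Inv_step _ _ _ _ _ _ hF hxs ab pn al lp pr rb hl hr hx hc hb).
Qed.

Lemma Inv_zero : Inv (@zeroOmega R).
Proof.
exists 0, [::]; split => //.
- by move=> z _; rewrite /zeroOmega /fml big_nil mul0r subr0.
- by rewrite /fml big_nil mul0r subr0.
Qed.

Lemma Inv_fold qs F : alpha < beta ->
  (forall q, q \in qs -> q \in `]alpha, beta[) -> Inv F ->
  Inv (foldl (fun F q => Defs.G alpha beta q F) F qs).
Proof.
elim: qs F => //= q qs IH F ab hq hI; apply: IH => //.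
  by move=> q' hq'; apply: hq; rewrite inE hq' orbT.
apply: Inv_G => //; by have := hq q (mem_head _ _); rewrite in_itv.
Qed.

End Aux.

End Dev.

(* qs = [:: q_1; ...; q_m];  F = G_{q_m} ( ... (G_{q_1} 0_Omega)) *)
Theorem mainTheorem4 (R : realType) (alpha beta : R) (qs : seq R) :
  alpha < beta ->
  (forall q, q \in qs -> q \in `]alpha, beta[) ->
  let F := foldl (fun F q => G alpha beta q F) (@zeroOmega R) qs in
  trop_poly alpha beta F /\
  (forall h, nonsmooth alpha beta F h -> multiplicity F h <= 2).
Proof.
move=> ab hq F; apply: Dev.Inv_final => //.
by apply: Dev.Inv_fold => //; exact: Dev.Inv_zero.
Qed.
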